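(* Let $a,c,d\in\mathbb{Q}$ with $a,c,d\neq 0$, let $f(t)=t^4+ct+d$, and for $t\in\mathbb{Q}$ with $f(t)\ne0$ let $E^{f(t)}$ be the elliptic curve $f(t)y^2=x^3+ax$ over $\mathbb{Q}$. Then infinitely many fibres $E^{f(t)}$, $t\in\mathbb{Q}$, have positive rank. More precisely, there is a set $W\subset\mathbb{Q}$, which is dense in the half-interval $(-d/c,\infty)$ if $ac>0$, respectively dense in $(-\infty,-d/c)$ if $ac<0$, such that $E^{f(t)}$ has positive Mordell–Weil rank over $\mathbb{Q}$ for all $t\in W$. *)

(* Defs.v *)
From mathcomp Require Import all_boot all_order all_algebra.
Set Implicit Arguments. Unset Strict Implicit. Unset Printing Implicit Defensive.
Import Order.TTheory GRing.Theory Num.Theory.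
Local Open Scope ring_scope.

(* Rational points of the curve  F y^2 = x^3 + a x  (F, a <> 0):
   [None] is the point at infinity O, [Some (x,y)] an affine point. *)
Definition pt := option (rat * rat).

Definition on_curve (F a : rat) (P : pt) : Prop :=
  match P with
  | None => True
  | Some (x, y) => F * y ^+ 2 = x ^+ 3 + a * x
  end.

(* A line y = y1 + l (x - x1) meets the cubic in three points whose
   x-coordinates sum to F l^2; the sum is the reflection (x,y) |-> (x,-y)
   of the third intersection point. *)
Definition add_pt (F a : rat) (P Q : pt) : pt :=
  match P, Q with
  | None, _ => Q
  | _, None => P
  | Some (x1, y1), Some (x2, y2) =>
      if x1 == x2 then
        if y1 + y2 == 0 then None
        else
          let l := (3 * x1 ^+ 2 + a) / (2 * F * y1) in
          let x3 := F * l ^+ 2 - 2 * x1 in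
          Some (x3, - (y1 + l * (x3 - x1)))
      else
        let l := (y2 - y1) / (x2 - x1) in
        let x3 := F * l ^+ 2 - x1 - x2 in
        Some (x3, - (y1 + l * (x3 - x1)))
  end.

Fixpoint mul_pt (F a : rat) (n : nat) (P : pt) : pt :=
  match n with
  | O => None
  | S m => add_pt F a P (mul_pt F a m P)
  end.

(* The Mordell-Weil group E(Q) of  F y^2 = x^3 + a x  has positive rank
   iff it is not torsion, i.e. it has a rational point of infinite order. *)
Definition positive_rank (F a : rat) : Prop :=
  exists P : pt, on_curve F a P /\ forall n : nat, (0 < n)%N -> mul_pt F a n P <> None.

Definition fpoly (c d t : rat) : rat := t ^+ 4 + c * t + d.

(* W is dense in the open interval (lo, hi) (hi = None means +oo,
   lo = None means -oo): every nonempty open subinterval meets W. *)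
Definition dense_in (W : rat -> Prop) (lo hi : option rat) : Prop :=
  forall u v : rat, u < v ->
    (match lo with Some l => is_true (l <= u) | None => True end) ->
    (match hi with Some h => is_true (v <= h) | None => True end) ->
    exists t, W t /\ u < t /\ t < v.

(* Main.v *)
Require Import Defs.
From mathcomp Require Import all_boot all_order all_algebra.
From mathcomp Require Import ring lra zify.
Import Order.TTheory GRing.Theory Num.Theory.
Local Open Scope ring_scope.

(* Proof strategy: for t = (a g^4 - d)/c the fibre
   f(t) y^2 = x^3 + a x contains P = (t^2/g^2, t/g^3); P has infinite
   order by a 2-adic formal-group argument (closure + congruence of the
   parameter x/(rho y)) combined with the symmetry Q_{N-j} = -Q_j. *)

Definition int2 (r : rat) : Prop :=
  exists n d : int, odd (absz d) /\ r = n%:~R / d%:~R.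

Lemma odd_neq0 {d : int} : odd (absz d) -> (d%:~R : rat) != 0.
Proof. move=> h; rewrite intr_eq0; apply/eqP => e; move: h; rewrite e. by []. Qed.

Lemma int2_int (k : int) : int2 k%:~R.
Proof. exists k, 1; split => //; by rewrite divr1. Qed.

Lemma int2_0 : int2 0. Proof. by have := int2_int 0. Qed.
Lemma int2_1 : int2 1. Proof. by have := int2_int 1. Qed.

Lemma int2D r1 r2 : int2 r1 -> int2 r2 -> int2 (r1 + r2).
Proof.
move=> [n1 [d1 [h1 ->]]] [n2 [d2 [h2 ->]]].
exists (n1 * d2 + n2 * d1), (d1 * d2); split; first by nia.
have := odd_neq0 h1; have := odd_neq0 h2 => e2 e1.
rewrite rmorphD !rmorphM /=. by field; apply/andP; split.
Qed.

Lemma int2M r1 r2 : int2 r1 -> int2 r2 -> int2 (r1 * r2).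
Proof.
move=> [n1 [d1 [h1 ->]]] [n2 [d2 [h2 ->]]].
exists (n1 * n2), (d1 * d2); split; first by nia.
have := odd_neq0 h1; have := odd_neq0 h2 => e2 e1.
rewrite !rmorphM /=. by field; apply/andP; split.
Qed.

Lemma int2N r : int2 r -> int2 (- r).
Proof. move=> h; rewrite -mulN1r; apply: int2M => //; exact: (int2_int (-1)). Qed.

Lemma int2B r1 r2 : int2 r1 -> int2 r2 -> int2 (r1 - r2).
Proof. by move=> h1 h2; apply: int2D => //; apply: int2N. Qed.

Lemma int2X r k : int2 r -> int2 (r ^+ k).
Proof. move=> h; elim: k => [|k ih]; first by rewrite expr0; exact: int2_1.
by rewrite exprS; apply: int2M. Qed.

Lemma int2_unit m : int2 m -> (1 + 2 * m != 0) /\ int2 ((1 + 2 * m)^-1).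
Proof.
move=> [n [d [h ->]]].
have hd := odd_neq0 h.
have h' : odd (absz (d + 2 * n)) by lia.
have hd' := odd_neq0 h'.
have E : 1 + 2 * (n%:~R / d%:~R) = (d + 2 * n)%:~R / d%:~R :> rat.
  rewrite rmorphD rmorphM /=. by field.
rewrite E; split; first by rewrite mulf_neq0 // invr_neq0.
exists d, (d + 2 * n); split => //. by rewrite invf_div.
Qed.

Lemma int2_half_even r (N : nat) : int2 r -> r * 2 = N%:R -> ~~ odd N.
Proof.
move=> [n [d [h ->]]] E.
have hd := odd_neq0 h.
have E2 : (n * 2)%:~R = (N%:Z * d)%:~R :> rat.
  have E1 : n%:~R * 2 = N%:R * d%:~R :> rat by rewrite -E mulrAC divfK.
  by rewrite !rmorphM /= -E1.
move/intr_inj/(congr1 absz): E2. rewrite !abszM /= => E3.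
have : odd (absz n * 2) = odd (N * absz d) by rewrite E3.
rewrite !oddM h andbT /= andbF. by move=> <-.
Qed.

Lemma add_on_curve F a P Q : F != 0 -> on_curve F a P -> on_curve F a Q ->
  on_curve F a (add_pt F a P Q).
Proof.
case: P => [[x1 y1]|]; case: Q => [[x2 y2]|] //= hF h1 h2.
case: eqP => [ex|nex].
  case: eqP => [//|ny] /=. subst x2.
  have y10 : y1 != 0.
    apply/eqP => y0; apply: ny; move: h2; rewrite -h1 y0 expr0n /= mulr0.
    by move/eqP; rewrite mulf_eq0 (negbTE hF) /= sqrf_eq0 => /eqP ->; rewrite addr0.
  set l := (3 * x1 ^+ 2 + a) / (2 * F * y1).
  set x3 := F * l ^+ 2 - 2 * x1.
  have key : F * (y1 + l * (x3 - x1)) ^+ 2 - x3 ^+ 3 - a * x3 =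
     (F * y1 ^+ 2 - x1 ^+ 3 - a * x1) + (x3 - x1) * (2 * F * l * y1 - 3 * x1 ^+ 2 - a).
    rewrite /x3; ring.
  have hl : 2 * F * l * y1 = 3 * x1 ^+ 2 + a by rewrite /l; field; rewrite hF y10.
  have z1 : F * y1 ^+ 2 - x1 ^+ 3 - a * x1 = 0 by rewrite h1; ring.
  have z2 : 2 * F * l * y1 - 3 * x1 ^+ 2 - a = 0 by rewrite hl; ring.
  rewrite z1 z2 mulr0 addr0 in key.
  by apply/eqP; rewrite sqrrN -subr_eq0; apply/eqP; rewrite -key; ring.
set l := (y2 - y1) / (x2 - x1).
set x3 := F * l ^+ 2 - x1 - x2.
have n21 : x2 - x1 != 0 by rewrite subr_eq0; apply/eqP => e; apply: nex.
have key : (F * (y1 + l * (x3 - x1)) ^+ 2 - x3 ^+ 3 - a * x3) * (x2 - x1) =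
   (F * y1 ^+ 2 - x1 ^+ 3 - a * x1) * (x2 - x3) +
   (F * (y1 + l * (x2 - x1)) ^+ 2 - x2 ^+ 3 - a * x2) * (x3 - x1).
  rewrite /x3; ring.
have hy : y1 + l * (x2 - x1) = y2 by rewrite /l; field.
have z1 : F * y1 ^+ 2 - x1 ^+ 3 - a * x1 = 0 by rewrite h1; ring.
have z2 : F * y2 ^+ 2 - x2 ^+ 3 - a * x2 = 0 by rewrite h2; ring.
rewrite hy z1 z2 !mul0r addr0 in key.
move/eqP: key; rewrite mulf_eq0 (negbTE n21) orbF.
by move/eqP=> key2; rewrite /= sqrrN; apply/eqP; rewrite -subr_eq0; apply/eqP; rewrite -key2; ring.
Qed.

Definition neg_pt (P : pt) : pt :=
  match P with None => None | Some (x, y) => Some (x, - y) end.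

Lemma neg_ptK P : neg_pt (neg_pt P) = P.
Proof. by case: P => [[x y]|] //=; rewrite opprK. Qed.

Lemma same_x_y (F a x u v : rat) : F != 0 -> F * u ^+ 2 = x ^+ 3 + a * x ->
  F * v ^+ 2 = x ^+ 3 + a * x -> v = u \/ v = - u.
Proof.
move=> hF hu hv. have : F * v ^+ 2 = F * u ^+ 2 by rewrite hu hv.
move/(mulfI hF)/eqP; rewrite eqf_sqr => /orP [/eqP|/eqP]; by [left|right].
Qed.

Lemma sym_add F a xp yp X Z : F != 0 -> yp != 0 ->
  on_curve F a (Some (xp, yp)) -> on_curve F a X ->
  add_pt F a (Some (xp, yp)) X = neg_pt Z -> add_pt F a (Some (xp, yp)) Z = neg_pt X.
Proof.
move=> hF hy0 /= hp.
have y2 : yp + yp != 0.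
  by rewrite -mulr2n mulrn_eq0 negb_or hy0.
case: X => [[xx yx]|]; case: Z => [[xz yz]|] /= hx hE.
2: { move: hE; case: eqP => [<-|//]; case: eqP => [/eqP|//].
  by rewrite addr_eq0 => /eqP -> _. }
2: { case: hE => <- ey. have -> : yz = - yp by rewrite ey opprK.
  by rewrite eqxx subrr eqxx. }
2: by [].
move: hE.
case: (xp =P xx) => [exx|nxx].
  subst xx. case: eqP => [//|nz] /= [ex ey].
  have eyx : yx = yp.
    case: (same_x_y _ _ _ _ _ hF hp hx) => // e; exfalso; apply: nz; rewrite e; ring.
  subst yx.
  set l := (3 * xp ^+ 2 + a) / (2 * F * yp) in ex ey.
  have eyz : yz = yp + l * (xz - xp) by rewrite -ex; apply: oppr_inj.
  case: (xp =P xz) => [e3|ne3].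
    rewrite -e3 subrr mulr0 addr0 in eyz; rewrite eyz.
    rewrite (negbTE y2) -/l. congr (Some (_, _)); first by rewrite ex.
    by rewrite ex -e3 subrr mulr0 addr0.
  have nd : xz - xp != 0 by rewrite subr_eq0; apply/eqP => e; apply: ne3.
  have hm : (yz - yp) / (xz - xp) = l by rewrite eyz; field.
  rewrite hm; congr (Some (_, _)).
    by rewrite -ex; ring.
  have -> : F * l ^+ 2 - xp - xz = xp by rewrite -ex; ring.
  by rewrite subrr mulr0 addr0.
have ndx : xx - xp != 0 by rewrite subr_eq0; apply/eqP => e; apply: nxx.
set l := (yx - yp) / (xx - xp) in hx.
move=> [ex ey].
have eyz : yz = yp + l * (xz - xp) by rewrite -ex; apply: oppr_inj.
have eyx : yx = yp + l * (xx - xp) by rewrite /l; field.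
case: (xp =P xz) => [e3|ne3].
  rewrite -e3 subrr mulr0 addr0 in eyz; rewrite eyz (negbTE y2).
  have hA : F * l * (yx + yp) = xx ^+ 2 + xx * xp + xp ^+ 2 + a.
    apply: (mulIf ndx).
    have -> : F * l * (yx + yp) * (xx - xp) = F * (yx ^+ 2 - yp ^+ 2).
      rewrite eyx; ring.
    rewrite mulrBr hx hp; ring.
  have ex' : F * l ^+ 2 - xp - xx = xp by rewrite [in RHS]e3 -ex.
  have hl2 : F * l ^+ 2 = 2 * xp + xx by lra.
  have H : 2 * F * l * yp = 3 * xp ^+ 2 + a.
    have -> : 2 * F * l * yp = F * l * (yx + yp) - F * l ^+ 2 * (xx - xp) by rewrite eyx; ring.
    rewrite hA hl2; ring.
  have hl : (3 * xp ^+ 2 + a) / (2 * F * yp) = l by rewrite -H; field; rewrite hF hy0.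
  rewrite /= hl; congr (Some (_, _)); first by rewrite hl2; ring.
  by rewrite eyx hl2; ring.
have nd : xz - xp != 0 by rewrite subr_eq0; apply/eqP => e; apply: ne3.
have hm : (yz - yp) / (xz - xp) = l by rewrite eyz; field.
rewrite hm; congr (Some (_, _)); rewrite -ex -/l; first by ring.
by rewrite eyx; ring.
Qed.

Lemma chord_ids (F a x1 y1 x2 y2 rho : rat) :
  x1 != 0 -> x2 != 0 -> y1 != 0 -> y2 != 0 -> rho != 0 -> x2 - x1 != 0 ->
  x1 * y2 ^+ 2 - x2 * y1 ^+ 2 != 0 -> x2 * y1 - x1 * y2 != 0 ->
  x1 * x2 ^+ 3 - x1 ^+ 3 * x2 != 0 ->
  F = (x1 * x2 ^+ 3 - x1 ^+ 3 * x2) / (x1 * y2 ^+ 2 - x2 * y1 ^+ 2) ->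
  a = (y1 ^+ 2 * x2 ^+ 3 - y2 ^+ 2 * x1 ^+ 3) / (x1 * y2 ^+ 2 - x2 * y1 ^+ 2) ->
  let l := (y2 - y1) / (x2 - x1) in
  let x3 := F * l ^+ 2 - x1 - x2 in
  let y3 := - (y1 + l * (x3 - x1)) in
  let b := a * rho ^+ 4 / F ^+ 2 in
  let T1 := x1 / (rho * y1) in let T2 := x2 / (rho * y2) in
  let S1 := F / (rho ^+ 3 * y1) in let S2 := F / (rho ^+ 3 * y2) in
  let al := (S2 - S1) / (T2 - T1) in let be := S1 - al * T1 in
  let D := 1 + b * al ^+ 2 in
  x3 * D = rho * y3 * ((T1 + T2) * D + 2 * b * al * be) /\
  y3 * (al * ((T1 + T2) * D + 2 * b * al * be) - be * D) = F * D / rho ^+ 3.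
Proof.
move=> ? ? ? ? ? ? ? ? ? hF ha; cbv zeta. rewrite hF ha.
by split; field; rewrite ?mulNr; repeat (apply/andP; split).
Qed.


Lemma dbl_ids (F a x y rho : rat) :
  x != 0 -> y != 0 -> rho != 0 -> x ^+ 3 + a * x != 0 ->
  F = (x ^+ 3 + a * x) / y ^+ 2 ->
  let l := (3 * x ^+ 2 + a) / (2 * F * y) in
  let x3 := F * l ^+ 2 - 2 * x in
  let y3 := - (y + l * (x3 - x)) in
  let b := a * rho ^+ 4 / F ^+ 2 in
  let T := x / (rho * y) in
  let S := F / (rho ^+ 3 * y) in
  let E := 1 - 2 * b * T * S in
  let al := (3 * T ^+ 2 + b * S ^+ 2) / E in let be := S - al * T in
  let D := 1 + b * al ^+ 2 in
  E != 0 ->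
  x3 * D = rho * y3 * (2 * T * D + 2 * b * al * be) /\
  y3 * (al * (2 * T * D + 2 * b * al * be) - be * D) = F * D / rho ^+ 3.
Proof.
move=> ? ? ? h3 hF; cbv zeta. rewrite hF => hE.
have h4 : x ^+ 3 + a * x - 2 * a * x != 0.
  apply: contra hE => /eqP h0. apply/eqP.
  have -> : 1 - 2 * (a * rho ^+ 4 / ((x ^+ 3 + a * x) / y ^+ 2) ^+ 2) * (x / (rho * y)) *
    ((x ^+ 3 + a * x) / y ^+ 2 / (rho ^+ 3 * y)) = (x ^+ 3 + a * x - 2 * a * x) / (x ^+ 3 + a * x).
    by field; repeat (apply/andP; split).
  by rewrite h0 mul0r.
by split; field; repeat (apply/andP; split).
Qed.

Lemma dbl_ids' {F a x y rho l x3 y3 b T S E al be D : rat} :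
  x != 0 -> y != 0 -> rho != 0 -> x ^+ 3 + a * x != 0 ->
  F = (x ^+ 3 + a * x) / y ^+ 2 ->
  l = (3 * x ^+ 2 + a) / (2 * F * y) -> x3 = F * l ^+ 2 - 2 * x ->
  y3 = - (y + l * (x3 - x)) -> b = a * rho ^+ 4 / F ^+ 2 ->
  T = x / (rho * y) -> S = F / (rho ^+ 3 * y) -> E = 1 - 2 * b * T * S ->
  al = (3 * T ^+ 2 + b * S ^+ 2) / E -> be = S - al * T -> D = 1 + b * al ^+ 2 ->
  E != 0 ->
  x3 * D = rho * y3 * (2 * T * D + 2 * b * al * be) /\
  y3 * (al * (2 * T * D + 2 * b * al * be) - be * D) = F * D / rho ^+ 3.
Proof.
move=> h1 h2 h3 h4 h5 -> -> -> -> -> -> -> -> -> ->.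
move: (dbl_ids _ _ _ _ rho h1 h2 h3 h4 h5). by cbv zeta.
Qed.

Lemma chord_ids' {F a x1 y1 x2 y2 rho l x3 y3 b T1 T2 S1 S2 al be D : rat} :
  x1 != 0 -> x2 != 0 -> y1 != 0 -> y2 != 0 -> rho != 0 -> x2 - x1 != 0 ->
  x1 * y2 ^+ 2 - x2 * y1 ^+ 2 != 0 -> x2 * y1 - x1 * y2 != 0 ->
  x1 * x2 ^+ 3 - x1 ^+ 3 * x2 != 0 ->
  F = (x1 * x2 ^+ 3 - x1 ^+ 3 * x2) / (x1 * y2 ^+ 2 - x2 * y1 ^+ 2) ->
  a = (y1 ^+ 2 * x2 ^+ 3 - y2 ^+ 2 * x1 ^+ 3) / (x1 * y2 ^+ 2 - x2 * y1 ^+ 2) ->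
  l = (y2 - y1) / (x2 - x1) -> x3 = F * l ^+ 2 - x1 - x2 ->
  y3 = - (y1 + l * (x3 - x1)) -> b = a * rho ^+ 4 / F ^+ 2 ->
  T1 = x1 / (rho * y1) -> T2 = x2 / (rho * y2) ->
  S1 = F / (rho ^+ 3 * y1) -> S2 = F / (rho ^+ 3 * y2) ->
  al = (S2 - S1) / (T2 - T1) -> be = S1 - al * T1 -> D = 1 + b * al ^+ 2 ->
  x3 * D = rho * y3 * ((T1 + T2) * D + 2 * b * al * be) /\
  y3 * (al * ((T1 + T2) * D + 2 * b * al * be) - be * D) = F * D / rho ^+ 3.
Proof.
move=> h1 h2 h3 h4 h5 h6 h7 h8 h9 hF ha -> -> -> -> -> -> -> -> -> -> ->.
move: (chord_ids F a x1 y1 x2 y2 rho h1 h2 h3 h4 h5 h6 h7 h8 h9 hF ha). by cbv zeta.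
Qed.

Definition Tc (rho x y : rat) : rat := x / (rho * y).
Definition Sc (F rho y : rat) : rat := F / (rho ^+ 3 * y).
Definition inC (F rho : rat) (Q : pt) : Prop :=
  match Q with
  | Some (x, y) => y != 0 /\ int2 (Tc rho x y) /\ int2 (Sc F rho y)
  | None => False
  end.
Definition Tv (rho : rat) (Q : pt) : rat :=
  match Q with Some (x, y) => Tc rho x y | None => 0 end.

Lemma x_neq0 {F a x y : rat} : F != 0 -> y != 0 -> F * y ^+ 2 = x ^+ 3 + a * x -> x != 0.
Proof.
move=> hF hy h; apply/eqP => x0; move: h; rewrite x0 expr0n /= mulr0 addr0.
by move/eqP; rewrite mulf_eq0 (negbTE hF) sqrf_eq0 (negbTE hy).
Qed.

Lemma ts_rel {F a rho x y : rat} : F != 0 -> rho != 0 -> y != 0 ->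
  F * y ^+ 2 = x ^+ 3 + a * x ->
  Sc F rho y = Tc rho x y ^+ 3 + (a * rho ^+ 4 / F ^+ 2) * Tc rho x y * Sc F rho y ^+ 2.
Proof.
move=> hF hr hy h; apply/eqP; rewrite -subr_eq0; apply/eqP.
have -> : Sc F rho y - (Tc rho x y ^+ 3 + (a * rho ^+ 4 / F ^+ 2) * Tc rho x y * Sc F rho y ^+ 2)
  = (F * y ^+ 2 - (x ^+ 3 + a * x)) / (rho ^+ 3 * y ^+ 3).
  by rewrite /Sc /Tc; field; rewrite hF hr hy.
by rewrite h subrr mul0r.
Qed.

Lemma unit2 (m : rat) : int2 m -> (1 + 2 * m != 0) /\ int2 ((1 + 2 * m)^-1).
Proof. exact: int2_unit. Qed.

Ltac i2 := repeat first [ assumption | apply: int2D | apply: int2B | apply: int2M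
  | apply: int2N | apply: int2X | exact: int2_1 | exact: int2_0
  | exact: (int2_int 2) | exact: (int2_int 3) ].

Lemma add_C (F a rho : rat) Q1 Q2 : F != 0 -> rho != 0 ->
  int2 (a * rho ^+ 4 / F ^+ 2 / 2) ->
  on_curve F a Q1 -> on_curve F a Q2 -> inC F rho Q1 -> inC F rho Q2 ->
  add_pt F a Q1 Q2 = None \/
  (inC F rho (add_pt F a Q1 Q2) /\
   int2 ((Tv rho (add_pt F a Q1 Q2) - Tv rho Q1 - Tv rho Q2) / 2)).
Proof.
case: Q1 => [[x1 y1]|] //; case: Q2 => [[x2 y2]|] //.
move=> hF hr hb /= h1 h2 [y10 [iT1 iS1]] [y20 [iT2 iS2]].
set b := (a * rho ^+ 4 / F ^+ 2 : rat) in hb.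
have ib : int2 b.
  have -> : b = 2 * (b / 2) by field.
  by apply: int2M => //; exact: (int2_int 2).
have x10 := x_neq0 hF y10 h1.
have x20 := x_neq0 hF y20 h2.
have r1 := ts_rel hF hr y10 h1.
have r2 := ts_rel hF hr y20 h2.
rewrite -/b in r1 r2.
case: (x1 =P x2) => [ex|nx].
  case: (y1 + y2 =P 0) => [_|ny]; first by left.
  right. rewrite -ex in h2.
  have ey : y2 = y1.
    case: (same_x_y _ _ _ _ _ hF h1 h2) => // e; exfalso; apply: ny; rewrite e; ring.
  rewrite ey -ex.
  set T := (Tc rho x1 y1 : rat) in iT1 r1 *. set S := (Sc F rho y1 : rat) in iS1 r1 *.
  have [E0 iE] : (1 + 2 * (- (b * T * S)) != 0) /\ int2 ((1 + 2 * (- (b * T * S)))^-1).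
    by apply: int2_unit; apply: int2N; apply: int2M => //; apply: int2M.
  have eE : 1 + 2 * (- (b * T * S)) = 1 - 2 * b * T * S by ring.
  rewrite eE in E0 iE.
  set E := (1 - 2 * b * T * S : rat) in E0 iE.
  set al := ((3 * T ^+ 2 + b * S ^+ 2) / E : rat).
  have ial : int2 al.
    apply: int2M => //; apply: int2D; last by apply: int2M => //; apply: int2X.
    by apply: int2M; [exact: (int2_int 3) | apply: int2X].
  set be := (S - al * T : rat).
  have ibe : int2 be by apply: int2B => //; apply: int2M.
  have [D0 iD] : (1 + 2 * (b / 2 * al ^+ 2) != 0) /\ int2 ((1 + 2 * (b / 2 * al ^+ 2))^-1).
    by apply: int2_unit; apply: int2M => //; apply: int2X.
  have eD : 1 + 2 * (b / 2 * al ^+ 2) = 1 + b * al ^+ 2 by field.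
  rewrite eD in D0 iD.
  set D := (1 + b * al ^+ 2 : rat) in D0 iD.
  have h3 : x1 ^+ 3 + a * x1 != 0 by rewrite -h1 mulf_neq0 // sqrf_eq0.
  have hF' : F = (x1 ^+ 3 + a * x1) / y1 ^+ 2 by rewrite -h1; field.
  set l := ((3 * x1 ^+ 2 + a) / (2 * F * y1) : rat).
  set x3 := (F * l ^+ 2 - 2 * x1 : rat).
  set y3 := (- (y1 + l * (x3 - x1)) : rat).
  have [I1 I2] := @dbl_ids' F a x1 y1 rho l x3 y3 b T S E al be D x10 y10 hr h3 hF' erefl erefl erefl erefl erefl erefl erefl erefl erefl erefl E0.
  have iDD : int2 D by rewrite /D; i2.
  clearbody l x3 y3 D be al E S T b.
  set K := (2 * T * D + 2 * b * al * be : rat) in I1 I2.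
  have y30 : y3 != 0.
    apply/eqP => y0; move: I2; rewrite y0 mul0r => /eqP; rewrite eq_sym.
    by rewrite !mulf_eq0 invr_eq0 expf_eq0 (negbTE hF) (negbTE D0) (negbTE hr) andbF.
  have eT : Tc rho x3 y3 = K / D.
    have -> : x3 = rho * y3 * K / D by rewrite -I1 mulfK.
    by rewrite /Tc; field; rewrite hr y30 D0.
  have eS : Sc F rho y3 = (al * K - be * D) / D.
    have -> : F = y3 * (al * K - be * D) * rho ^+ 3 / D by rewrite I2; field; rewrite hr D0.
    by rewrite /Sc; field; rewrite hr y30 D0.
  have iK : int2 K by rewrite /K; i2.
  rewrite /inC /Tv eT eS; split; first (split => //; split; i2).
  have -> : (K / D - T - T) / 2 = b * al * be * D^-1 by rewrite /K; field.
  i2.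
right.
have n21 : x2 - x1 != 0 by rewrite subr_eq0; apply/eqP => e; apply: nx.
set T1 := (Tc rho x1 y1 : rat) in iT1 r1 *. set S1 := (Sc F rho y1 : rat) in iS1 r1 *.
set T2 := (Tc rho x2 y2 : rat) in iT2 r2 *. set S2 := (Sc F rho y2 : rat) in iS2 r2 *.
have [U0 iU] : (1 + 2 * (- (b / 2 * T1 * (S1 + S2))) != 0) /\ int2 ((1 + 2 * (- (b / 2 * T1 * (S1 + S2))))^-1) by apply: int2_unit; i2.
have eU : 1 + 2 * (- (b / 2 * T1 * (S1 + S2))) = 1 - b * T1 * (S1 + S2) by field.
rewrite eU in U0 iU.
set U := (1 - b * T1 * (S1 + S2) : rat) in U0 iU.
have key : (S2 - S1) * U = (T2 - T1) * (T1 ^+ 2 + T1 * T2 + T2 ^+ 2 + b * S2 ^+ 2).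
  apply/eqP; rewrite -subr_eq0; apply/eqP.
  have -> : (S2 - S1) * U - (T2 - T1) * (T1 ^+ 2 + T1 * T2 + T2 ^+ 2 + b * S2 ^+ 2) =
    (S2 - (T2 ^+ 3 + b * T2 * S2 ^+ 2)) - (S1 - (T1 ^+ 3 + b * T1 * S1 ^+ 2)) by rewrite /U; ring.
  by rewrite -r1 -r2 !subrr.
have ex1 : x1 = T1 * rho * y1 by rewrite /T1 /Tc; field; rewrite hr y10.
have ex2 : x2 = T2 * rho * y2 by rewrite /T2 /Tc; field; rewrite hr y20.
have S10 : S1 != 0 by rewrite /S1 /Sc mulf_neq0 // invr_neq0 // mulf_neq0 // expf_neq0.
have S20 : S2 != 0 by rewrite /S2 /Sc mulf_neq0 // invr_neq0 // mulf_neq0 // expf_neq0.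
have ey1 : y1 = F / (rho ^+ 3 * S1) by rewrite /S1 /Sc; field; rewrite hF hr y10.
have ey2 : y2 = F / (rho ^+ 3 * S2) by rewrite /S2 /Sc; field; rewrite hF hr y20.
have nT : T2 - T1 != 0.
  apply/eqP => eT; move: key; rewrite eT mul0r => /eqP; rewrite mulf_eq0 (negbTE U0) orbF.
  rewrite subr_eq0 => /eqP eS.
  apply: nx; rewrite ex1 ex2 ey1 ey2 eS; move/eqP: eT; rewrite subr_eq0 => /eqP ->. by [].
set al := ((S2 - S1) / (T2 - T1) : rat).
have ial : int2 al.
  have -> : al = (T1 ^+ 2 + T1 * T2 + T2 ^+ 2 + b * S2 ^+ 2) * U^-1.
    apply/eqP; rewrite /al eqr_div //; apply/eqP; by rewrite key mulrC.
  i2.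
set be := (S1 - al * T1 : rat).
have ibe : int2 be by rewrite /be; i2.
have [D0 iD] : (1 + 2 * (b / 2 * al ^+ 2) != 0) /\ int2 ((1 + 2 * (b / 2 * al ^+ 2))^-1).
  by apply: int2_unit; i2.
have eD : 1 + 2 * (b / 2 * al ^+ 2) = 1 + b * al ^+ 2 by field.
rewrite eD in D0 iD.
set D := (1 + b * al ^+ 2 : rat) in D0 iD.
have iDD : int2 D by rewrite /D; i2.
have nxy : x2 * y1 - x1 * y2 != 0.
  apply: contra nT => /eqP h0; apply/eqP.
  have -> : T2 - T1 = (x2 * y1 - x1 * y2) / (rho * y1 * y2) by rewrite /T1 /T2 /Tc; field; rewrite hr y10 y20.
  by rewrite h0 mul0r.
have eFd : F * (x1 * y2 ^+ 2 - x2 * y1 ^+ 2) = x1 * x2 ^+ 3 - x1 ^+ 3 * x2.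
  have -> : F * (x1 * y2 ^+ 2 - x2 * y1 ^+ 2) = x1 * (F * y2 ^+ 2) - x2 * (F * y1 ^+ 2) by ring.
  rewrite h1 h2; ring.
have hx1 : x1 ^+ 3 = F * y1 ^+ 2 - a * x1 by rewrite h1; ring.
have hx2 : x2 ^+ 3 = F * y2 ^+ 2 - a * x2 by rewrite h2; ring.
have ead : a * (x1 * y2 ^+ 2 - x2 * y1 ^+ 2) = y1 ^+ 2 * x2 ^+ 3 - y2 ^+ 2 * x1 ^+ 3.
  rewrite hx1 hx2; ring.
have det0 : x1 * y2 ^+ 2 - x2 * y1 ^+ 2 != 0.
  apply/eqP => d0; move: eFd; rewrite d0 mulr0 => /esym /eqP.
  have -> : x1 * x2 ^+ 3 - x1 ^+ 3 * x2 = x1 * x2 * (x2 - x1) * (x2 + x1) by ring.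
  rewrite !mulf_eq0 (negbTE x10) (negbTE x20) (negbTE n21) /= addr_eq0 => /eqP ex.
  move: d0; rewrite ex => /eqP; apply/negP.
  have -> : x1 * y2 ^+ 2 - - x1 * y1 ^+ 2 = x1 * (y1 ^+ 2 + y2 ^+ 2) by ring.
  rewrite mulf_eq0 (negbTE x10) /= paddr_eq0 ?sqr_ge0 // sqrf_eq0 (negbTE y10) //.
have Fn0 : x1 * x2 ^+ 3 - x1 ^+ 3 * x2 != 0 by rewrite -eFd mulf_neq0.
have hF' : F = (x1 * x2 ^+ 3 - x1 ^+ 3 * x2) / (x1 * y2 ^+ 2 - x2 * y1 ^+ 2) by rewrite -eFd mulfK.
have ha' : a = (y1 ^+ 2 * x2 ^+ 3 - y2 ^+ 2 * x1 ^+ 3) / (x1 * y2 ^+ 2 - x2 * y1 ^+ 2) by rewrite -ead mulfK.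
set l := ((y2 - y1) / (x2 - x1) : rat).
set x3 := (F * l ^+ 2 - x1 - x2 : rat).
set y3 := (- (y1 + l * (x3 - x1)) : rat).
have [I1 I2] := @chord_ids' F a x1 y1 x2 y2 rho l x3 y3 b T1 T2 S1 S2 al be D x10 x20 y10 y20 hr n21
   det0 nxy Fn0 hF' ha' erefl erefl erefl erefl erefl erefl erefl erefl erefl erefl erefl.
clearbody l x3 y3 D be al S1 S2 T1 T2 b.
set K := ((T1 + T2) * D + 2 * b * al * be : rat) in I1 I2.
have y30 : y3 != 0.
  apply/eqP => y0; move: I2; rewrite y0 mul0r => /eqP; rewrite eq_sym.
  by rewrite !mulf_eq0 invr_eq0 expf_eq0 (negbTE hF) (negbTE D0) (negbTE hr) andbF.
have eT : Tc rho x3 y3 = K / D.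
  have -> : x3 = rho * y3 * K / D by rewrite -I1 mulfK.
  by rewrite /Tc; field; rewrite hr y30 D0.
have eS : Sc F rho y3 = (al * K - be * D) / D.
  have -> : F = y3 * (al * K - be * D) * rho ^+ 3 / D by rewrite I2; field; rewrite hr D0.
  by rewrite /Sc; field; rewrite hr y30 D0.
have iK : int2 K by rewrite /K; i2.
rewrite /inC /Tv eT eS; split; first (split => //; split; i2).
have -> : (K / D - T1 - T2) / 2 = b * al * be * D^-1 by rewrite /K; field.
i2.
Qed.

Lemma nontorsion (F a xp yp : rat) : F != 0 -> xp != 0 -> yp != 0 ->
  F * yp ^+ 2 = xp ^+ 3 + a * xp ->
  int2 (a * (xp / yp) ^+ 4 / F ^+ 2 / 2) -> int2 (Sc F (xp / yp) yp) ->
  forall n, (0 < n)%N -> mul_pt F a n (Some (xp, yp)) <> None.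
Proof.
move=> hF hx hy hc hb hS.
set rho := (xp / yp : rat) in hb hS.
have hr : rho != 0 by rewrite /rho mulf_neq0 // invr_neq0.
set P := Some (xp, yp).
have onP : on_curve F a P by [].
have onc : forall n, on_curve F a (mul_pt F a n P).
  elim => [|n ih] //; exact: (add_on_curve _ _ _ _ hF onP ih).
have TP : Tc rho xp yp = 1 by rewrite /Tc /rho; field; rewrite hx hy.
have inP : inC F rho P by rewrite /= TP; split => //; split => //; exact: int2_1.
move=> n n0 Hn.
have exn : exists n, (0 < n)%N && (mul_pt F a n P == None) by exists n; rewrite n0 Hn eqxx.
case: (ex_minnP exn) => N /andP [N0 /eqP HN] Nmin.
have Q1 : mul_pt F a 1 P = P by [].
have N1 : (1 < N)%N.
  rewrite ltn_neqAle N0 andbT; apply/eqP => e; move: HN; rewrite -e Q1 //.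
have Qm : forall m, (0 < m < N)%N ->
   inC F rho (mul_pt F a m P) /\ int2 ((Tv rho (mul_pt F a m P) - m%:R) / 2).
  elim => [//|m ih] /andP [_ mN].
  case: m ih mN => [|m] ih mN.
    rewrite Q1; split => //. by rewrite /= TP subrr mul0r; exact: int2_0.
  have [iQ cQ] := ih (ltn_trans (ltnSn _) mN).
  have := add_C _ _ _ _ _ hF hr hb onP (onc m.+1) inP iQ.
  rewrite -/(mul_pt F a m.+2 P).
  case => [e|[iR cR]].
    have := Nmin m.+2; rewrite e eqxx andbT => /(_ isT); by rewrite leqNgt mN.
  split => //.
  have -> : (Tv rho (mul_pt F a m.+2 P) - m.+2%:R) / 2 =
     (Tv rho (mul_pt F a m.+2 P) - Tv rho P - Tv rho (mul_pt F a m.+1 P)) / 2 +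
     (Tv rho (mul_pt F a m.+1 P) - m.+1%:R) / 2.
    have TvP : Tv rho P = 1 by rewrite /= TP.
    rewrite TvP -(addn1 m.+1) natrD; ring.
  exact: int2D.
have [M eM] : exists M, N = M.+1 by exists N.-1; rewrite prednK.
have M0 : (0 < M)%N by rewrite -ltnS -eM.
have hM : (0 < M < N)%N by rewrite M0 eM ltnSn.
have [iM cM] := Qm M hM.
have HN' : add_pt F a P (mul_pt F a M P) = None by rewrite -HN eM.
have sym : forall j, (j <= N)%N -> mul_pt F a (N - j) P = neg_pt (mul_pt F a j P).
  elim => [_|j ih hj]; first by rewrite subn0 HN.
  have e1 : mul_pt F a (N - j) P = add_pt F a P (mul_pt F a (N - j.+1) P) by rewrite -(subnSK hj).
  have := ih (ltnW hj); rewrite e1 => h.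
  have := sym_add _ _ _ _ _ _ hF hy onP (onc _) h.
  move=> h2; rewrite -[mul_pt F a (N - j.+1) P]neg_ptK -h2. by [].
move: iM cM HN'; case: (mul_pt F a M P) => [[xm ym]|] //= iM cM.
case: (xp =P xm) => [exm|//]; case: eqP => [eym _|//].
move/eqP: eym; rewrite addrC addr_eq0 => /eqP eym.
have Tm : Tc rho xm ym = -1 by rewrite -exm eym /Tc /rho; field; rewrite hx hy.
rewrite Tm in cM.
have evN : ~~ odd N.
  apply: (int2_half_even (N%:R / 2 : rat) N); last by field.
  have -> : (N%:R / 2 : rat) = - ((-1 - M%:R) / 2) by rewrite eM -(addn1 M) natrD; field.
  exact: int2N.
have eN : N = (N./2).*2 by rewrite -{1}(odd_double_half N) (negbTE evN).
set h := N./2 in eN.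
have h0 : (0 < h)%N by move: N1; rewrite eN; case: (h).
have hN : (h < N)%N by rewrite [X in (_ < X)%N]eN -addnn -{1}(addn0 h) ltn_add2l.
have := sym h (ltnW hN).
have -> : (N - h = h)%N by rewrite {1}eN -addnn addnK.
have hh : (0 < h < N)%N by rewrite h0 hN.
have [iH _] := Qm h hh.
move: iH; case: (mul_pt F a h P) => [[xh yh]|] //= [yh0 _] [].
move/eqP; rewrite -subr_eq0 opprK -mulr2n mulrn_eq0 /= (negbTE yh0) //.
Qed.

Lemma cube_bound (x y B : rat) : 0 <= y -> y <= x -> x <= B ->
  x^+3 + x^+2*y + x*y^+2 + y^+3 <= 4 * B^+3.
Proof.
move=> h1 h2 h3.
have hx : 0 <= x by lra.
have hB : 0 <= B by lra.
have a1 : x * x <= B * B by apply: ler_pM.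
have a2 : x * x * x <= B * B * B by apply: ler_pM => //; apply: mulr_ge0.
have a3 : x * x * y <= B * B * B by apply: ler_pM => //; [apply: mulr_ge0 | lra].
have a4 : x * y * y <= B * B * B by apply: ler_pM => //; [apply: mulr_ge0 | apply: ler_pM; lra | lra].
have a5 : y * y * y <= B * B * B by apply: ler_pM => //; [apply: mulr_ge0 | apply: ler_pM; lra | lra].
rewrite !exprS !expr0 !mulr1.
have e : x * (x * x) + x * x * y + x * (y * y) + y * (y * y) = x*x*x + x*x*y + x*y*y + y*y*y by ring.
rewrite e. have -> : 4 * (B * (B * B)) = 4 * (B*B*B) by ring. lra.
Qed.

Lemma dense4 (L U : rat) : 0 <= L -> L < U ->
  exists n : rat, n != 0 /\ int2 n /\ L < n ^+ 4 /\ n ^+ 4 < U.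
Proof.
move=> L0 LU.
have U0 : 0 <= U by apply: le_trans L0 (ltW LU).
set B := (Num.Def.archi_bound U).+1.
have UB : U < B%:R by apply: lt_trans (archi_boundP U0) _; rewrite ltr_nat.
have B0 : (0 : rat) <= B%:R by rewrite ler0n.
set del := U - L.
have del0 : 0 < del by rewrite /del subr_gt0.
have Z0 : 0 <= 4 * B%:R ^+ 3 / del.
  by apply: divr_ge0; [apply: mulr_ge0 => //; apply: exprn_ge0 | exact: ltW].
set Q0 := Num.Def.archi_bound (4 * B%:R ^+ 3 / del).
set q := (Q0.*2).+1.
have oq : odd q by rewrite /q /= odd_double.
have q0 : (0 : rat) < q%:R by rewrite ltr0n.
have hq : 4 * B%:R ^+ 3 / del < q%:R.
  apply: lt_le_trans (archi_boundP Z0) _; rewrite ler_nat /q -addnn; lia.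
have hq' : 4 * B%:R ^+ 3 / q%:R < del.
  move: hq; rewrite !ltr_pdivrMr // => h. by rewrite [del * _]mulrC.
pose P := fun k : nat => L < (k%:R / q%:R) ^+ 4.
have eqB : (q * B)%N%:R / q%:R = B%:R :> rat.
  by rewrite natrM mulrAC divff ?mul1r // gt_eqF.
have exP : exists k, P k.
  exists (q * B)%N; rewrite /P eqB.
  apply: (lt_trans LU); apply: (lt_le_trans UB).
  by rewrite -natrX ler_nat -{1}(expn1 B); apply: leq_pexp2l.
case: (ex_minnP exP) => k Pk kmin.
have k0 : (0 < k)%N.
  case: k Pk kmin => // ; rewrite /P mul0r expr0n /= => h; move: (lt_le_trans h L0).
  by rewrite ltxx.
have kqB : (k <= q * B)%N.
  apply: kmin; rewrite /P eqB.
  apply: (lt_trans LU); apply: (lt_le_trans UB).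
  by rewrite -natrX ler_nat -{1}(expn1 B); apply: leq_pexp2l.
have nP : ~~ P k.-1.
  apply/negP => h; have := kmin _ h; rewrite leqNgt; move/negP; apply.
  by rewrite prednK // ltnSn.
move: nP; rewrite /P -leNgt => yL.
pose x : rat := k%:R / q%:R. pose y : rat := k.-1%:R / q%:R.
have {}yL : y ^+ 4 <= L := yL.
have y0 : 0 <= y by apply: divr_ge0; [rewrite ler0n | exact: ltW].
have exy : x - y = q%:R^-1.
  by rewrite /x /y -mulrBl -natrB ?leq_pred // -subn1 subKn // mul1r.
have yx : y <= x by rewrite -subr_ge0 exy invr_ge0 ltW.
have xB : x <= B%:R.
  rewrite /x ler_pdivrMr // mulrC -natrM ler_nat. exact: kqB.
have key : x ^+ 4 - y ^+ 4 = (x - y) * (x^+3 + x^+2*y + x*y^+2 + y^+3) by ring.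
have cb := cube_bound x y B%:R y0 yx xB.
have : x ^+ 4 - y ^+ 4 <= q%:R^-1 * (4 * B%:R ^+ 3) :> rat.
  rewrite key exy; apply: ler_wpM2l => //; rewrite invr_ge0 ltW //.
have -> : q%:R^-1 * (4 * B%:R ^+ 3) = 4 * B%:R ^+ 3 / q%:R :> rat by rewrite mulrC.
move=> hxy.
exists x; split.
  have kR : (k%:R : rat) != 0 by rewrite pnatr_eq0 -lt0n.
  by rewrite /x mulf_neq0 // invr_neq0 // gt_eqF.
split.
  exists k%:Z, q%:Z; split; [exact: oq | by rewrite /x !pmulrn].
split => //.
have : x ^+ 4 < y ^+ 4 + del by lra.
rewrite /del; lra.
Qed.

Lemma dens (k lo : rat) (W : rat -> Prop) : k != 0 ->
  (forall n, n != 0 -> int2 n -> W (k * n ^+ 4 + lo)) ->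
  (0 < k -> dense_in W (Some lo) None) /\ (k < 0 -> dense_in W None (Some lo)).
Proof.
move=> k0 hW; split => hk u v uv /=.
- move=> lu _.
  have L0 : 0 <= (u - lo) / k by apply: divr_ge0; [rewrite subr_ge0 | exact: ltW].
  have LU : (u - lo) / k < (v - lo) / k by rewrite ltr_pM2r ?invr_gt0 // ltrD2r.
  have [n [n0 [i2n [h1 h2]]]] := dense4 _ _ L0 LU.
  exists (k * n ^+ 4 + lo); split; first exact: hW.
  move: h1 h2; rewrite ltr_pdivrMr // ltr_pdivlMr // => h1 h2.
  split; lra.
- move=> _ vl.
  have L0 : 0 <= (v - lo) / k by apply: mulr_le0; [rewrite subr_le0 | rewrite invr_le0 ltW].
  have LU : (v - lo) / k < (u - lo) / k by rewrite ltr_nM2r ?invr_lt0 // ltrD2r.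
  have [n [n0 [i2n [h1 h2]]]] := dense4 _ _ L0 LU.
  exists (k * n ^+ 4 + lo); split; first exact: hW.
  move: h1 h2; rewrite ltr_ndivrMr // ltr_ndivlMr // => h1 h2.
  split; lra.
Qed.

Ltac fs := repeat (apply/andP; split); try assumption.

Lemma good_t (a c d g : rat) : a != 0 -> c != 0 -> d != 0 -> g != 0 ->
  int2 (a / d * g ^+ 4 / 2) -> int2 (a * c ^+ 4 / d ^+ 4 * g ^+ 4 / 2) ->
  fpoly c d ((a * g ^+ 4 - d) / c) != 0 /\
  positive_rank (fpoly c d ((a * g ^+ 4 - d) / c)) a.
Proof.
move=> ha hc hd hg iv iw.
set t := (a * g ^+ 4 - d) / c.
set v2 := a / d * g ^+ 4 / 2 in iv.
have [U0 iU] : (1 + 2 * - v2 != 0) /\ int2 ((1 + 2 * - v2)^-1) by apply: int2_unit; apply: int2N.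
have et : t = - (d * (1 + 2 * - v2)) / c by rewrite /t /v2; field; fs.
have hdg : d - a * g ^+ 4 != 0.
  have -> : d - a * g ^+ 4 = d * (1 + 2 * - v2) by rewrite /v2; field.
  by rewrite mulf_neq0.
have t0 : t != 0 by rewrite et mulf_neq0 ?invr_neq0 // oppr_eq0 mulf_neq0.
set w2 := (a * g ^+ 4 / t ^+ 4) / 2.
have ew : w2 = a * c ^+ 4 / d ^+ 4 * g ^+ 4 / 2 * ((1 + 2 * - v2)^-1) ^+ 4.
  by rewrite /w2 et /v2; field; fs.
have iw2 : int2 w2 by rewrite ew; i2.
have [W0 iW] : (1 + 2 * w2 != 0) /\ int2 ((1 + 2 * w2)^-1) by apply: int2_unit.
have eF : fpoly c d t = t ^+ 4 * (1 + 2 * w2) by rewrite /fpoly /w2 {2}/t; field; fs.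
have F0 : fpoly c d t != 0 by rewrite eF mulf_neq0 // expf_neq0.
split => //.
have F' : t ^+ 4 + a * g ^+ 4 != 0.
  have -> : t ^+ 4 + a * g ^+ 4 = fpoly c d t by rewrite /fpoly /t; field.
  exact: F0.
set F := fpoly c d t in eF F0 *.
have xp0 : t ^+ 2 / g ^+ 2 != 0 by rewrite mulf_neq0 ?invr_neq0 ?expf_neq0.
have yp0 : t / g ^+ 3 != 0 by rewrite mulf_neq0 ?invr_neq0 ?expf_neq0.
have hcv : F * (t / g ^+ 3) ^+ 2 = (t ^+ 2 / g ^+ 2) ^+ 3 + a * (t ^+ 2 / g ^+ 2).
  by rewrite eF /w2; field; fs.
exists (Some (t ^+ 2 / g ^+ 2, t / g ^+ 3)); split; first exact: hcv.
apply: nontorsion => //.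
  have -> : a * (t ^+ 2 / g ^+ 2 / (t / g ^+ 3)) ^+ 4 / F ^+ 2 / 2 = w2 * ((1 + 2 * w2)^-1) ^+ 2.
    by rewrite eF /w2; field; fs.
  i2.
have -> : Sc F (t ^+ 2 / g ^+ 2 / (t / g ^+ 3)) (t / g ^+ 3) = 1 + 2 * w2.
  by rewrite /Sc eF; field; fs.
i2.
Qed.

Ltac i3 := repeat first [ assumption | apply: int2D | apply: int2B | apply: int2M
  | apply: int2N | apply: int2X | exact: (int2_int _) | exact: int2_1
  | exact: (int2_int 8) ].

Theorem corollary4p3 (a c d : rat) (ha : a != 0) (hc : c != 0) (hd : d != 0) :
  exists W : rat -> Prop,
    (0 < a * c -> dense_in W (Some (- d / c)) None) /\
    (a * c < 0 -> dense_in W None (Some (- d / c))) /\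
    (forall t, W t -> fpoly c d t != 0 /\ positive_rank (fpoly c d t) a).
Proof.
pose K1 := a * c ^+ 4 / d ^+ 4. pose K2 := a / d.
pose M : rat := 2 * (denq K1)%:~R * (denq K2)%:~R.
have dK1 : ((denq K1)%:~R : rat) != 0 by rewrite intr_eq0 denq_neq0.
have dK2 : ((denq K2)%:~R : rat) != 0 by rewrite intr_eq0 denq_neq0.
have M0 : M != 0 by rewrite /M !mulf_neq0.
pose W := fun t => exists n : rat, n != 0 /\ int2 n /\ t = (a * (M * n) ^+ 4 - d) / c.
exists W.
have kap0 : a * M ^+ 4 / c != 0 by rewrite !mulf_neq0 ?invr_neq0 ?expf_neq0.
have hW : forall n, n != 0 -> int2 n -> W (a * M ^+ 4 / c * n ^+ 4 + - d / c).
  move=> n n0 i; exists n; split => //; split => //. by field.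
have [D1 D2] := dens (a * M ^+ 4 / c) (- d / c) W kap0 hW.
have eK : a * M ^+ 4 / c = (a * c) * (M ^+ 4 / c ^+ 2) by field.
have pos : 0 < M ^+ 4 / c ^+ 2.
  by apply: divr_gt0; rewrite exprn_even_gt0 //= ?M0 ?hc.
split.
  move=> hac; apply: D1; rewrite eK; exact: mulr_gt0.
split.
  move=> hac; apply: D2; rewrite eK pmulr_llt0 //.
move=> t [n [n0 [i ->]]].
apply: good_t => //; first by rewrite mulf_neq0.
  have -> : a / d * (M * n) ^+ 4 / 2 =
    (numq K2)%:~R * (8 * (denq K1)%:~R ^+ 4 * (denq K2)%:~R ^+ 3) * n ^+ 4.
    by rewrite numqE /K2 /M; field.
  i3.
have -> : a * c ^+ 4 / d ^+ 4 * (M * n) ^+ 4 / 2 =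
  (numq K1)%:~R * (8 * (denq K1)%:~R ^+ 3 * (denq K2)%:~R ^+ 4) * n ^+ 4.
  by rewrite numqE /K1 /M; field.
i3.
Qed.
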